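(* Let $n>1$ be a natural number and $\Psi_n(t) = 1+t+\cdots+t^{n-1}$. Then $\operatorname{Discr}_\ast(\Psi_n(t)) = n^{n-2}$ and $\operatorname{Prod}_\ast(\Psi_n(t)) = n^{n-1}$; in particular $\operatorname{Discr}_\ast(\Psi_n(t))\cdot\operatorname{Prod}_\ast(\Psi_n(t)) = n^{n-2}\cdot n^{n-1}$.
   Context: For nonconstant $r(t)\in\mathbb{Z}[t]$ of degree $d$ with leading coefficient $a$, distinct roots $\lambda_1,\dots,\lambda_l\in\overline{\mathbb{Q}}$ with multiplicities $m_1,\dots,m_l$, and $m=\max m_i$: $\operatorname{Discr}_\ast(r(t)) := a^{1+2d^2}(m-1)!\prod_{1\le i\ne j\le l}(\lambda_i-\lambda_j)^m$ and $\operatorname{Prod}_\ast(r(t)) := a^{2d^3}\prod_{1\le i,j\le l,\ r(\lambda_i\lambda_j)\ne0}r(\lambda_i\lambda_j)$. *)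

(* Defs.v *)
From HB Require Import structures.
From mathcomp Require Import all_boot all_order all_algebra all_field.
Set Implicit Arguments. Unset Strict Implicit. Unset Printing Implicit Defensive.
Import Order.TTheory GRing.Theory Num.Theory.
Local Open Scope ring_scope.

(* Qbar is realised inside algC (algebraic complex numbers), which is an
   algebraically closed field of characteristic 0 containing all roots of
   integer polynomials. *)

Definition polyC_of (r : {poly int}) : {poly algC} := map_poly intr r.

(* The multiset of roots of r in algC (with multiplicity). *)
Definition rootsm (r : {poly int}) : seq algC :=
  sval (closed_field_poly_normal (polyC_of r)).

Definition droots (r : {poly int}) : seq algC := undup (rootsm r).

Definition maxmult (r : {poly int}) : nat :=
  \max_(z <- droots r) count_mem z (rootsm r).

Definition degr (r : {poly int}) : nat := (size r).-1.
Definition leadC (r : {poly int}) : algC := (lead_coef r)%:~R.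

Definition Discr_star (r : {poly int}) : algC :=
  leadC r ^+ (1 + 2 * (degr r) ^ 2) * ((maxmult r).-1`!)%:R *
  \prod_(i < size (droots r)) \prod_(j < size (droots r) | i != j)
     ((droots r)`_i - (droots r)`_j) ^+ maxmult r.

Definition Prod_star (r : {poly int}) : algC :=
  leadC r ^+ (2 * (degr r) ^ 3) *
  \prod_(i < size (droots r)) \prod_(j < size (droots r)
         | (polyC_of r).[(droots r)`_i * (droots r)`_j] != 0)
     (polyC_of r).[(droots r)`_i * (droots r)`_j].

Definition Psi (n : nat) : {poly int} := \sum_(i < n) 'X^i.

(* Main.v *)
Require Import Defs.
From HB Require Import structures.
From mathcomp Require Import all_boot all_order all_algebra all_field.
From mathcomp Require Import zify.
Import Order.TTheory GRing.Theory Num.Theory.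
Local Open Scope ring_scope.
Set Implicit Arguments. Unset Strict Implicit.

Lemma PsiE n : polyC_of (Psi n) = \sum_(i < n) 'X^i.
Proof.
rewrite /polyC_of /Psi rmorph_sum; apply: eq_bigr => i _.
exact: map_polyXn.
Qed.

Lemma PsiM n : ('X - 1) * polyC_of (Psi n) = 'X^n - 1.
Proof.
have := subrXX ('X : {poly algC}) 1 n.
rewrite expr1n => ->; congr (_ * _).
rewrite PsiE (reindex_inj rev_ord_inj) /=; apply: eq_bigr => i _.
rewrite expr1n mulr1; congr ('X^_); lia.
Qed.

Lemma Psi1 n : (polyC_of (Psi n)).[1] = n%:R.
Proof.
rewrite PsiE horner_sum.
under eq_bigr => i _ do rewrite hornerXn expr1n.
by rewrite sumr_const card_ord.
Qed.

Lemma Psi0 n : (0 < n)%N -> (polyC_of (Psi n)).[0] = 1.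
Proof.
case: n => // n _; rewrite PsiE horner_sum big_ord_recl /= hornerXn expr0n /=.
rewrite big1 ?addr0 // => i _; by rewrite hornerXn expr0n.
Qed.

Lemma Psi_monic n : (0 < n)%N -> polyC_of (Psi n) \is monic.
Proof.
move=> hn; rewrite -(monicMl _ (monicXsubC (1 : algC))) polyC1 PsiM.
by rewrite -polyC1 monicXnsubC.
Qed.

Lemma rootsmE n : (0 < n)%N ->
  polyC_of (Psi n) = \prod_(z <- rootsm (Psi n)) ('X - z%:P).
Proof.
move=> hn; rewrite /rootsm; case: closed_field_poly_normal => r /= {1}->.
by rewrite (monicP (Psi_monic hn)) scale1r.
Qed.

Lemma rootPsi n (x : algC) : (0 < n)%N ->
  root (polyC_of (Psi n)) x = (x ^+ n == 1) && (x != 1).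
Proof.
move=> hn.
have E : (x - 1) * (polyC_of (Psi n)).[x] = x ^+ n - 1.
  by have := congr1 (horner^~ x) (PsiM n); rewrite hornerM !hornerE.
apply/idP/andP => [/eqP h|[/eqP h1 h2]].
  split; first by rewrite -subr_eq0 -E h mulr0.
  apply/eqP => x1; move: h; rewrite x1 Psi1 => /eqP; rewrite pnatr_eq0; lia.
apply/eqP; move/eqP: E; rewrite h1 subrr mulf_eq0 subr_eq0 (negbTE h2) /=.
by move/eqP.
Qed.

Lemma mem_rootsm n x : (0 < n)%N -> (x \in rootsm (Psi n)) = root (polyC_of (Psi n)) x.
Proof. by move=> hn; rewrite (rootsmE hn) root_prod_XsubC. Qed.

Lemma size_Psi n : (0 < n)%N -> size (polyC_of (Psi n)) = n.
Proof.
move=> hn.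
have nz : polyC_of (Psi n) != 0 by apply: monic_neq0; exact: Psi_monic.
have h : size (('X - 1%:P) * polyC_of (Psi n)) = size ('X^n - 1%:P : {poly algC}).
  by rewrite polyC1 PsiM.
rewrite size_XnsubC // size_mul ?polyXsubC_eq0 // size_XsubC in h.
by case: h.
Qed.

Lemma size_rootsm n : (0 < n)%N -> size (rootsm (Psi n)) = n.-1.
Proof.
move=> hn; have := size_Psi hn; rewrite {1}(rootsmE hn) size_prod_XsubC.
move=> h; lia.
Qed.

Lemma uniq_rootsm n : (0 < n)%N -> uniq (rootsm (Psi n)).
Proof.
move=> hn; have [z pz] := C_prim_root_exists hn.
pose s := [seq z ^+ i | i <- iota 1 n.-1].
apply: (@leq_size_uniq _ s).
- rewrite map_inj_in_uniq ?iota_uniq // => i j; rewrite !mem_iota => hi hj /eqP.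
  rewrite (eq_prim_root_expr pz) !modn_small; [by move/eqP| lia | lia].
- move=> y /mapP [i]; rewrite mem_iota => hi ->.
  rewrite mem_rootsm // rootPsi // -exprM mulnC exprM (prim_expr_order pz) expr1n eqxx /=.
  rewrite -(prim_order_dvd pz); apply/negP => /dvdn_leq; lia.
- by rewrite size_rootsm // size_map size_iota.
Qed.

Lemma prod_cst (s : seq algC) (c : algC) : \prod_(x <- s) c = c ^+ size s.
Proof. by elim: s => [|a s IH]; rewrite ?big_nil ?big_cons ?IH ?exprS. Qed.

Lemma prod_cst_cond (s : seq algC) (P : pred algC) (c : algC) :
  \prod_(x <- s | P x) c = c ^+ count P s.
Proof.
elim: s => [|a s IH]; rewrite ?big_nil ?big_cons //= IH.
by case: (P a); rewrite ?exprS ?add0n.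
Qed.

Lemma idx_prod (r : seq algC) (F : algC -> algC -> algC) : uniq r ->
  \prod_(i < size r) \prod_(j < size r | i != j) F r`_i r`_j =
  \prod_(x <- r) \prod_(y <- r | y != x) F x y.
Proof.
move=> ur; rewrite (big_nth 0) big_mkord; apply: eq_bigr => i _.
rewrite (big_nth 0) big_mkord; apply: eq_bigl => j.
by rewrite nth_uniq // eq_sym.
Qed.

Lemma idx_prod2 (r : seq algC) (P : algC -> algC -> bool) (F : algC -> algC -> algC) :
  \prod_(i < size r) \prod_(j < size r | P r`_i r`_j) F r`_i r`_j =
  \prod_(x <- r) \prod_(y <- r | P x y) F x y.
Proof.
rewrite (big_nth 0) big_mkord; apply: eq_bigr => i _.
by rewrite (big_nth 0) big_mkord.
Qed.

Lemma leadC_Psi n : (0 < n)%N -> leadC (Psi n) = 1.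
Proof.
move=> hn; rewrite /leadC -[RHS](monicP (Psi_monic hn)) /polyC_of lead_coef_map_inj //.
exact: intr_inj.
Qed.

Lemma rootsm_pow n x : (0 < n)%N -> x \in rootsm (Psi n) -> x ^+ n = 1.
Proof. by move=> hn; rewrite mem_rootsm // rootPsi // => /andP [/eqP]. Qed.

Lemma rootsm_ne1 n x : (0 < n)%N -> x \in rootsm (Psi n) -> x != 1.
Proof. by move=> hn; rewrite mem_rootsm // rootPsi // => /andP []. Qed.

Lemma maxmult_Psi n : (1 < n)%N -> maxmult (Psi n) = 1%N.
Proof.
move=> hn; have hn0 : (0 < n)%N by lia.
rewrite /maxmult /droots undup_id ?uniq_rootsm //.
rewrite (eq_big_seq (fun _ => 1%N)); last first.
  by move=> z zr; rewrite count_uniq_mem ?uniq_rootsm // zr.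
have := size_rootsm hn0; case: (rootsm (Psi n)) => [|a t] /=; first lia.
move=> _; rewrite big_cons.
suff : (\max_(z <- t) 1 <= 1)%N by move=> h; apply/eqP; rewrite eqn_leq geq_max leqnn h /= leq_max leqnn.
by elim: t => [|b t IH]; rewrite ?big_nil ?big_cons // geq_max IH.
Qed.

Lemma Qx n x : (0 < n)%N -> x \in rootsm (Psi n) ->
  (x - 1) * \prod_(y <- rootsm (Psi n) | y != x) (x - y) = n%:R * x ^+ n.-1.
Proof.
move=> hn xr.
set r := rootsm (Psi n).
pose Q := \prod_(y <- rem x r) ('X - y%:P).
have PQ : polyC_of (Psi n) = ('X - x%:P) * Q.
  by rewrite (rootsmE hn) (perm_big _ (perm_to_rem xr)) big_cons.
have Qe : Q.[x] = \prod_(y <- r | y != x) (x - y).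
  rewrite /Q horner_prod rem_filter ?uniq_rootsm // big_filter.
  by apply: eq_bigr => y _; rewrite hornerXsubC.
have xn := rootsm_pow hn xr.
have S : ('X^n - 1 : {poly algC}) =
   ('X - x%:P) * \sum_(i < n) 'X ^+ (n.-1 - i) * x%:P ^+ i.
  by rewrite -subrXX -rmorphXn xn.
have E : ('X - 1) * Q = \sum_(i < n) 'X ^+ (n.-1 - i) * x%:P ^+ i.
  apply: (@mulfI _ ('X - x%:P)); first by rewrite polyXsubC_eq0.
  by rewrite -S -(PsiM n) PQ mulrA mulrA [('X - x%:P) * _]mulrC.
have := congr1 (horner^~ x) E; rewrite hornerM !hornerE Qe => ->.
rewrite horner_sum (eq_bigr (fun _ => x ^+ n.-1)).
  by rewrite sumr_const card_ord mulr_natl.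
move=> [i /= hi] _; rewrite hornerM hornerXn -rmorphXn hornerC -exprD subnK //.
lia.
Qed.

Lemma Dcore m :
  \prod_(x <- rootsm (Psi m.+2)) \prod_(y <- rootsm (Psi m.+2) | y != x) (x - y)
  = (m.+2 ^ m)%:R.
Proof.
have hn : (0 < m.+2)%N by [].
set r := rootsm (Psi m.+2).
have sz : size r = m.+1 by rewrite size_rootsm.
have P1 : \prod_(x <- r) (1 - x) = m.+2%:R.
  rewrite -(Psi1 m.+2) (rootsmE hn) horner_prod.
  by apply: eq_bigr => x _; rewrite hornerXsubC.
have P0 : \prod_(x <- r) (0 - x) = 1.
  rewrite -[RHS](Psi0 hn) (rootsmE hn) horner_prod.
  by apply: eq_bigr => x _; rewrite hornerXsubC.
set c : algC := (-1) ^+ m.+1.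
have cc : c * c = 1 by rewrite -exprMn mulrNN mulr1 expr1n.
have Pm1 : \prod_(x <- r) (x - 1) = c * m.+2%:R.
  have -> : c = \prod_(x <- r) (-1) by rewrite prod_cst sz.
  rewrite -P1 -big_split /=.
  by apply: eq_bigr => x _; rewrite mulN1r opprB.
have Px : \prod_(x <- r) x = c.
  have : c * \prod_(x <- r) x = 1.
    have -> : c = \prod_(x <- r) (-1) by rewrite prod_cst sz.
    by rewrite -big_split -[RHS]P0 /=; apply: eq_bigr => x _; rewrite mulN1r sub0r.
  by move=> h; have := congr1 (fun t => c * t) h; rewrite /= mulrA cc mul1r mulr1.
have H : \prod_(x <- r) ((x - 1) * \prod_(y <- r | y != x) (x - y)) =
         \prod_(x <- r) (m.+2%:R * x ^+ m.+1).
  by apply: eq_big_seq => x xr; rewrite Qx.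
rewrite big_split [RHS]big_split /= prodrXl Px Pm1 prod_cst sz in H.
have cp : c ^+ m.+2 = 1.
  by rewrite /c -exprM -signr_odd oddM /= andbN.
have n0 : (m.+2%:R : algC) != 0 by rewrite pnatr_eq0.
apply: (mulfI n0); rewrite natrX -exprS.
have : c * (c * m.+2%:R * \prod_(x <- r) \prod_(y <- r | y != x) (x - y)) =
       c * (m.+2%:R ^+ m.+1 * c ^+ m.+1) by rewrite H.
by rewrite !mulrA cc mul1r [c * _]mulrC -mulrA -exprS cp mulr1 => ->.
Qed.

Lemma Pcore m :
  \prod_(x <- rootsm (Psi m.+2))
     \prod_(y <- rootsm (Psi m.+2) | (polyC_of (Psi m.+2)).[x * y] != 0)
        (polyC_of (Psi m.+2)).[x * y]
  = (m.+2 ^ m.+1)%:R.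
Proof.
have hn : (0 < m.+2)%N by [].
set r := rootsm (Psi m.+2).
have sz : size r = m.+1 by rewrite size_rootsm.
rewrite natrX.
have -> : (m.+2%:R : algC) ^+ m.+1 = \prod_(x <- r) m.+2%:R by rewrite prod_cst sz.
apply: eq_big_seq => x xr.
have xn := rootsm_pow hn xr.
have x0 : x != 0.
  apply/eqP => x0; move: xn; rewrite x0 expr0n /= => /eqP; by rewrite eq_sym oner_eq0.
have xir : x^-1 \in r.
  by rewrite mem_rootsm // rootPsi // exprVn xn invr1 eqxx invr_eq1 (rootsm_ne1 hn xr).
have cond : forall y, ((y \in r) && ((polyC_of (Psi m.+2)).[x * y] != 0)) = (y == x^-1).
  move=> y; case yr: (y \in r) => /=.
    have yn := rootsm_pow hn yr.
    have : ~~ root (polyC_of (Psi m.+2)) (x * y) = (x * y == 1).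
      by rewrite rootPsi // exprMn xn yn mul1r eqxx /= negbK.
    rewrite rootE => ->.
    apply/eqP/eqP => [h|->]; last exact: mulfV.
    by rewrite -(mulKf x0 y) h mulr1.
  apply/esym/negbTE; apply/eqP => e; by rewrite e xir in yr.
rewrite big_seq_cond (eq_big (fun y => y == x^-1) (fun _ => m.+2%:R)) //.
- rewrite prod_cst_cond.
  have -> : count (fun y => y == x^-1) r = count_mem x^-1 r by [].
  by rewrite count_uniq_mem ?uniq_rootsm // xir.
- by move=> y; rewrite cond => /eqP ->; rewrite mulfV // Psi1.
Qed.

Unset Implicit Arguments. Set Strict Implicit.

Theorem proposition4p12 (n : nat) (hn : (1 < n)%N) :
  Discr_star (Psi n) = (n ^ (n - 2))%:R /\
  Prod_star (Psi n) = (n ^ (n - 1))%:R /\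
  Discr_star (Psi n) * Prod_star (Psi n) = (n ^ (n - 2))%:R * (n ^ (n - 1))%:R.
Proof.
have hD : Discr_star (Psi n) = (n ^ (n - 2))%:R.
  rewrite /Discr_star /droots undup_id ?uniq_rootsm; last by lia.
  rewrite maxmult_Psi // leadC_Psi; last by lia.
  rewrite expr1n !mul1r /=.
  case: n hn => [|[|m]] // _.
  have -> : (m.+2 - 2 = m)%N by lia.
  rewrite ?mul1r (idx_prod (fun x y => x - y)) ?uniq_rootsm //.
  exact: Dcore.
  done.
have hP : Prod_star (Psi n) = (n ^ (n - 1))%:R.
  rewrite /Prod_star /droots undup_id ?uniq_rootsm; last by lia.
  rewrite leadC_Psi; last by lia.
  rewrite expr1n mul1r.
  move: hD; case: n hn => [|[|m]] // _.
  have -> : (m.+2 - 1 = m.+1)%N by lia.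
  move=> _; rewrite (idx_prod2 (rootsm (Psi m.+2)) (fun x y => (polyC_of (Psi m.+2)).[x * y] != 0)
     (fun x y => (polyC_of (Psi m.+2)).[x * y])).
  exact: Pcore.
  done.
split; first exact: hD.
split; first exact: hP.
rewrite hD hP; reflexivity.
Qed.
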